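(* Let $-1$ denote the automorphism of $\mathcal A_\theta^{alg}$ with $U_1\mapsto U_1^{-1}$, $U_2\mapsto U_2^{-1}$, and let $H^0(\mathcal A_\theta^{alg},{}_{-1}\mathcal A_\theta^{alg\ast})$ be the space of formal series $\varphi=\sum\varphi_{n,m}U_1^nU_2^m$ with $((-1)\cdot a)\varphi=\varphi a$ for all $a\in\mathcal A_\theta^{alg}$. Let $\mathbb Z_4$ be generated by the automorphism $\rho$ with $\rho\cdot U_1=U_2^{-1}$, $\rho\cdot U_2=U_1$ (so $\rho^2=-1$), acting on this space termwise. Then $H^0(\mathcal A_\theta^{alg},{}_{-1}\mathcal A_\theta^{alg\ast})^{\mathbb Z_4}\cong\mathbb C^3$.
   Context: Let $\theta\in\mathbb R\setminus\mathbb Q$, $\lambda=e^{2\pi i\theta}$. $\mathcal A_\theta^{alg}$ is the complex algebra of finite sums $\sum a_{n,m}U_1^nU_2^m$ with $U_1,U_2$ invertible and $U_2U_1=\lambda U_1U_2$; formal series $\sum_{(n,m)\in\mathbb Z^2}\varphi_{n,m}U_1^nU_2^m$ with arbitrary coefficients form an $\mathcal A_\theta^{alg}$-bimodule via multiplication. Termwise action of an automorphism $h$: $h\cdot\sum\varphi_{n,m}U_1^nU_2^m=\sum\varphi_{n,m}\,h\cdot(U_1^nU_2^m)$. *)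

(* Defs.v *)
From HB Require Import structures.
From mathcomp Require Import all_boot all_order all_algebra.
From mathcomp Require Import complex.
From mathcomp Require Import reals trigo.

Set Implicit Arguments.
Unset Strict Implicit.
Unset Printing Implicit Defensive.

Import Order.TTheory GRing.Theory Num.Theory.
Local Open Scope ring_scope.
Local Open Scope complex_scope.

Section NCTorus.
Variable R : realType.
Variable theta : R.

Definition lambda : R[i] := (cos (2 * pi * theta))%:C + 'i * (sin (2 * pi * theta))%:C.

(* A monomial U_1^n U_2^m is indexed by (n, m) : int * int. *)
(* Product of monomials, using U_2 U_1 = lambda U_1 U_2 (hence
   U_2^b U_1^n = lambda^(b n) U_1^n U_2^b):
   (U_1^a U_2^b)(U_1^n U_2^m) = lambda^(b n) U_1^(a+n) U_2^(b+m). *)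
Definition mono_mul (x y : int * int) : R[i] * (int * int) :=
  (lambda ^ (x.2 * y.1), (x.1 + y.1, x.2 + y.2)%R).

Definition series := int * int -> R[i].

(* Elements of A_theta^alg: finite sums  sum_k c_k U_1^{n_k} U_2^{m_k}
   (represented by a finite list of (coefficient, exponent) pairs). *)
Definition alg := seq (R[i] * (int * int)).

(* Left multiplication of a series by a monomial x:
   x * sum_q phi_q U^q = sum_q phi_q (mono_mul x q); the coefficient
   at p comes from the unique q = p - x. *)
Definition lmul_mono (x : int * int) (phi : series) : series :=
  fun p => let q := (p.1 - x.1, p.2 - x.2)%R in (mono_mul x q).1 * phi q.

(* Right multiplication of a series by a monomial x:
   (sum_q phi_q U^q) * x = sum_q phi_q (mono_mul q x). *)
Definition rmul_mono (x : int * int) (phi : series) : series :=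
  fun p => let q := (p.1 - x.1, p.2 - x.2)%R in (mono_mul q x).1 * phi q.

Definition lact (a : alg) (phi : series) : series :=
  fun p => \sum_(t <- a) t.1 * lmul_mono t.2 phi p.
Definition ract (a : alg) (phi : series) : series :=
  fun p => \sum_(t <- a) t.1 * rmul_mono t.2 phi p.

Definition minus1_mono (x : int * int) : R[i] * (int * int) := (1, (- x.1, - x.2)%R).
Definition minus1_alg (a : alg) : alg :=
  [seq ((t.1 * (minus1_mono t.2).1), (minus1_mono t.2).2) | t <- a].

Definition H0_minus1 (phi : series) : Prop :=
  forall a : alg, lact (minus1_alg a) phi = ract a phi.

(* The automorphism rho : U_1 |-> U_2^{-1}, U_2 |-> U_1; on monomials
   rho(U_1^n U_2^m) = U_2^{-n} U_1^m = mono_mul (0,-n) (m,0)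
                    = lambda^(-n m) U_1^m U_2^{-n}. *)
Definition rho_mono (x : int * int) : R[i] * (int * int) :=
  mono_mul (0, - x.1)%R (x.2, 0)%R.

(* Termwise action of rho on series:
   rho . sum_x phi_x U^x = sum_x phi_x rho(U^x); the term landing at
   p = (p1,p2) comes from the unique x = (-p2, p1) (rho_mono x has exponent p). *)
Definition rho_series (phi : series) : series :=
  fun p => let x := (- p.2, p.1)%R in (rho_mono x).1 * phi x.

Definition Z4_invariant (phi : series) : Prop :=
  forall k : 'I_4, iter k rho_series phi = phi.

Definition lincomb3 (c : 'rV[R[i]]_3) (f : 'I_3 -> series) : series :=
  fun p => \sum_(i < 3) c ord0 i * f i p.

End NCTorus.

(* Main.v *)
Require Import Defs.
From HB Require Import structures.
From mathcomp Require Import all_boot all_order all_algebra.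
From mathcomp Require Import complex.
From mathcomp Require Import reals trigo.
From mathcomp Require Import ring lra zify.
From Stdlib Require Import FunctionalExtensionality.
Import GRing.Theory Num.Theory.
Local Open Scope ring_scope.

Definition ee (n : int) : int := (n %% 2)%Z.

Lemma eeMD (b a : int) : ee (b * 2 + a) = ee a.
Proof. exact: modzMDl. Qed.

Lemma eeN a : ee (- a) = ee a.
Proof. by rewrite -(eeMD (-a) a); congr ee; ring. Qed.

Lemma ee01 a : ee a = 0 \/ ee a = 1.
Proof.
have h1 := modz_ge0 a (isT : (2:int) != 0).
have h2 := ltz_pmod a (isT : (0:int) < 2).
rewrite /ee; lia.
Qed.

Lemma eePM a b : ee (a - - b) = ee (a - b).
Proof. by rewrite -[RHS](eeMD b); congr ee; ring. Qed.

Lemma ee_decomp a : a = (a %/ 2)%Z * 2 + ee a.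
Proof. exact: divz_eq. Qed.

Definition clsE (a b : int) : nat := if a == b then (if a == 0 then 0%N else 1%N) else 2%N.
Lemma clsEC a b : clsE a b = clsE b a.
Proof. by rewrite /clsE eq_sym; case: eqP => // ->. Qed.
Definition cls (u : int * int) : 'I_3 := inord (clsE (ee u.1) (ee u.2)).

Set Implicit Arguments.
Section S.
Variable R : realType.
Variable theta : R.
Local Open Scope complex_scope.

Definition mu : R[i] := (cos (pi * theta)) +i* (sin (pi * theta)).

Lemma mu2 : mu ^+ 2 = lambda theta.
Proof.
rewrite /lambda /mu expr2.
have -> : 2 * pi * theta = pi * theta + pi * theta by ring.
rewrite cosD sinD.
apply/eqP; rewrite eq_complex /=; apply/andP; split; apply/eqP; ring.
Qed.

Lemma mu_neq0 : mu != 0.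
Proof.
apply/negP => /eqP; rewrite /mu => -[Hc Hs].
have := cos2Dsin2 (pi * theta); rewrite Hc Hs expr0n /= addr0 => /eqP.
by rewrite eq_sym oner_eq0.
Qed.

Lemma lamE (n : int) : lambda theta ^ n = mu ^ (2 * n).
Proof. by rewrite -mu2 -exprz_exp. Qed.

Lemma muD (a b : int) : mu ^ a * mu ^ b = mu ^ (a + b).
Proof. by rewrite expfzDr // mu_neq0. Qed.

Definition ff (i : 'I_3) : series R := fun u => (cls u == i)%:R * mu ^ (u.1 * u.2).

Lemma lincombE c u : lincomb3 c ff u = c ord0 (cls u) * mu ^ (u.1 * u.2).
Proof.
rewrite /lincomb3 (bigD1 (cls u)) //= big1 ?addr0.
  by rewrite /ff eqxx mul1r.
by move=> i /negPf Hi; rewrite /ff eq_sym Hi mul0r mulr0.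
Qed.

Definition urep (k : nat) : int * int :=
  match k with 0%N => (0, 0) | 1%N => (1, 1) | _ => (1, 0) end.

Lemma cls_urep (i : 'I_3) : cls (urep i) = i.
Proof.
apply/val_inj; case: i => -[|[|[|//]]] Hi; rewrite /cls /= inordK //.
Qed.

Lemma uniq_c c c' : lincomb3 c ff = lincomb3 c' ff -> c = c'.
Proof.
move=> E; apply/rowP => i.
have := congr1 (fun g => g (urep i)) E; rewrite /= !lincombE cls_urep.
by move/mulIf; apply; rewrite expfz_neq0 // mu_neq0.
Qed.

Lemma resolve {a b c d : int} {X Y : R[i]} :
  mu ^ a * X = mu ^ b * Y -> b - a + c = d -> X * mu ^ c = Y * mu ^ d.
Proof.
move=> H <-.
have -> : X = mu ^ (- a) * (mu ^ b * Y) by rewrite -H mulrA muD addNr expr0z mul1r.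
rewrite mulrA muD mulrAC muD mulrC; congr (_ * mu ^ _); ring.
Qed.

Lemma H0_rel phi : H0_minus1 theta phi -> forall p x : int * int,
  lmul_mono theta (- x.1, - x.2) phi p = rmul_mono theta x phi p.
Proof.
move=> H p x; have := congr1 (fun g => g p) (H [:: (1, x)]).
by rewrite /lact /ract /minus1_alg /= !big_seq1 /= !mul1r.
Qed.

Lemma shift phi : H0_minus1 theta phi -> forall u x : int * int,
  phi u * mu ^ (- (u.1 * u.2)) =
  phi (u.1 - x.1 * 2, u.2 - x.2 * 2) * mu ^ (- ((u.1 - x.1 * 2) * (u.2 - x.2 * 2))).
Proof.
move=> H u x; have := H0_rel H (u.1 - x.1, u.2 - x.2) x.
rewrite /lmul_mono /rmul_mono /mono_mul /=.
have e1 : (u.1 - x.1 - - x.1, u.2 - x.2 - - x.2) = u.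
  by case: u => a b /=; congr pair; ring.
have e2 : (u.1 - x.1 - x.1, u.2 - x.2 - x.2) = (u.1 - x.1 * 2, u.2 - x.2 * 2).
  by congr pair; ring.
rewrite e1 e2 !lamE => Hr.
apply: (resolve Hr); ring.
Qed.

Lemma reduce phi : H0_minus1 theta phi -> forall u : int * int,
  phi u = phi (ee u.1, ee u.2) * mu ^ (- (ee u.1 * ee u.2)) * mu ^ (u.1 * u.2).
Proof.
move=> H u.
have d1 : u.1 - (u.1 %/ 2)%Z * 2 = ee u.1 by rewrite {1}(ee_decomp u.1); ring.
have d2 : u.2 - (u.2 %/ 2)%Z * 2 = ee u.2 by rewrite {1}(ee_decomp u.2); ring.
have := shift H u ((u.1 %/ 2)%Z, (u.2 %/ 2)%Z); rewrite /= d1 d2 => <-.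
by rewrite -mulrA muD addNr expr0z mulr1.
Qed.

Lemma rho_fix c : rho_series theta (lincomb3 c ff) = lincomb3 c ff.
Proof.
apply: functional_extensionality => p.
rewrite /rho_series /rho_mono /mono_mul /= !lincombE.
have -> : cls (- p.2, p.1) = cls p by rewrite /cls /= eeN clsEC.
rewrite lamE mulrCA muD; congr (_ * mu ^ _); rewrite /=; ring.
Qed.

Lemma H0_lin c : H0_minus1 theta (lincomb3 c ff).
Proof.
move=> a; apply: functional_extensionality => p.
rewrite /lact /ract /minus1_alg big_map; apply: eq_bigr => t _ /=.
rewrite mulr1; congr (_ * _); move: (t.2) => x.
rewrite /lmul_mono /rmul_mono /mono_mul /= !lincombE.
have -> : cls (p.1 - - x.1, p.2 - - x.2) = cls (p.1 - x.1, p.2 - x.2).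
  by rewrite /cls /= !eePM.
rewrite !lamE mulrCA [RHS]mulrCA !muD; congr (_ * mu ^ _); rewrite /=; ring.
Qed.
End S.

Theorem mainTheorem7 (R : realType) (theta : R)
  (theta_irr : ~ exists q : rat, theta = ratr q) :
  exists f : 'I_3 -> series R,
    forall phi : series R,
      (H0_minus1 theta phi /\ Z4_invariant theta phi) <->
      exists! c : 'rV[R[i]]_3, phi = lincomb3 c f.
Proof.
exists (@ff R theta) => phi; split.
- move=> [H Z].
  have Hr : rho_series theta phi = phi by have := Z (inord 1); rewrite inordK.
  have H01 : phi (1, 0) = phi (0, 1).
    have := congr1 (fun g => g (1, 0)) Hr.
    by rewrite /rho_series /rho_mono /mono_mul /= oppr0 mul0r expr0z mul1r.
  pose c : 'rV[R[i]]_3 :=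
    \row_(i < 3) (phi (urep i) * @mu R theta ^ (- ((urep i).1 * (urep i).2))).
  have Hc : phi = lincomb3 c (@ff R theta).
    apply: functional_extensionality => u.
    rewrite lincombE mxE (reduce H u); congr (_ * _).
    rewrite /cls.
    case: (ee01 u.1) => ->; case: (ee01 u.2) => -> /=;
      rewrite /clsE /= inordK //=.
    by rewrite H01.
  exists c; split => // c' E.
  by apply: (@uniq_c R theta); rewrite -Hc -E.
- move=> [c [Hc _]]; subst phi; split; first exact: H0_lin.
  move=> k; elim: (nat_of_ord k) => //= n ->; exact: rho_fix.
Qed.
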